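(* Let $\|\cdot\|$ be an arbitrary seminorm on $\mathbb{R}^n$, and let $\gamma>0$, $\alpha\ge 1$ and $i\in\mathbb{N}$ be constants. Then there is a class $\mathfrak{C}$ consisting of a single (infinite) sequence of cost functions such that, for every deterministic or randomized online algorithm $A$, either $R_i(A)=\Omega(T)$, or, for all sufficiently large $T$, both $CR^\alpha_{i+1}(A)\ge\gamma$ and $CD^\alpha_{i+1}(A)\ge\gamma T$.
   Context: Smoothed online convex optimization (SOCO): a convex decision space $F\subseteq(\mathbb{R}^+)^n$ and a seminorm $\|\cdot\|$ on $\mathbb{R}^n$ are fixed. An online (possibly randomized) algorithm $A$ faces a sequence of cost functions $c^1,c^2,\dots$ with $c^t:F\to\mathbb{R}^+$, and produces decisions $x^1,x^2,\dots\in F$, where $x^s$ may depend only on $c^1,\dots,c^{s-1}$ and on the algorithm's internal randomness. For $\alpha\ge 0$ and lookahead $i\in\mathbb{N}$, the $\alpha$-penalized cost with lookahead $i$ over horizon $T$ is $C_i^\alpha(A)=\mathbb{E}\big[\sum_{t=1}^T c^t(x^{t+i})+\alpha\|x^{t+i}-x^{t+i-1}\|\big]$, with initial action $x^i=0$ and expectation over the algorithm's randomness; write $C_i=C_i^1$. The static optimum is $OPT_s=\min_{x\in F}\sum_{t=1}^T c^t(x)$, and for $\alpha\ge1$ the $\alpha$-unfair dynamic optimum is $OPT_d^\alpha=\min_{(x^1,\dots,x^T)\in F^T}\sum_{t=1}^T c^t(x^t)+\alpha\|x^t-x^{t-1}\|$ (with $x^0=0$). For a class $\mathfrak{C}$ of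 cost functions: the regret $R_i(A)$ is (at most) $\rho(T)$ if for every sequence $(c^1,\dots,c^T)\in\mathfrak{C}^T$, $C_i^0(A)-OPT_s\le\rho(T)$; the $\alpha$-unfair competitive ratio $CR_i^\alpha(A)$ is $\rho(T)$ if for every such sequence $C_i(A)\le\rho(T)\,OPT_d^\alpha+O(1)$; the $\alpha$-unfair competitive difference $CD_i^\alpha(A)$ is $\rho(T)$ if for every such sequence $C_i(A)-OPT_d^\alpha\le\rho(T)$. Statements such as $R_i(A)=\Omega(T)$ or $CR_i^\alpha(A)\ge\gamma$ refer to the best (smallest) $\rho(T)$ for which the corresponding guarantee holds over $\mathfrak{C}$. *)

(* Defs.v *)
From HB Require Import structures.
From mathcomp Require Import all_boot all_order all_algebra.
From mathcomp Require Import all_classical all_reals all_analysis.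
Set Implicit Arguments. Unset Strict Implicit. Unset Printing Implicit Defensive.
Import Order.TTheory GRing.Theory Num.Theory.
Import numFieldNormedType.Exports.
Local Open Scope classical_set_scope.
Local Open Scope ring_scope.

Section SOCO.
Variables (R : realType) (n : nat).
Local Notation vec := 'rV[R]_n.

Definition seminorm (N : vec -> R) : Prop :=
  (forall x y, N (x + y) <= N x + N y) /\
  (forall (a : R) x, N (a *: x) = `|a| * N x).

Definition decision_space (F : set vec) : Prop :=
  F !=set0 /\
  (forall x y (l : R), F x -> F y -> 0 <= l <= 1 -> F (l *: x + (1 - l) *: y)) /\
  (forall x, F x -> forall j : 'I_n, 0 <= x ord0 j).

Definition cost_function (F : set vec) (f : vec -> R) : Prop :=
  (forall x, F x -> 0 <= f x) /\
  (forall x y (l : R), F x -> F y -> 0 <= l <= 1 ->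
     f (l *: x + (1 - l) *: y) <= l * f x + (1 - l) * f y).

(* A cost sequence: c t is the cost function c^t (t >= 1; c 0 unused). *)
Definition cost_seq := nat -> vec -> R.

(* A randomized online algorithm with randomness w in Omega: the decision
   x^s = A w s cs may only depend on c^1,...,c^(s-1) and w. *)
Definition online_algorithm (F : set vec) (d : measure_display)
    (Omega : measurableType d) (A : Omega -> nat -> cost_seq -> vec) : Prop :=
  (forall w s (cs cs' : cost_seq),
      (forall t, (0 < t < s)%N -> cs t = cs' t) -> A w s cs = A w s cs') /\
  (forall w s cs, (0 < s)%N -> F (A w s cs)) /\
  (forall s cs (j : 'I_n), measurable_fun setT (fun w => A w s cs ord0 j)).

(* Decisions with lookahead i: the initial action x^i is set to 0. *)
Definition look (x : nat -> vec) (i s : nat) : vec :=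
  if s == i then 0 else x s.

Definition hit_cost (c : cost_seq) (x : nat -> vec) (i T : nat) : R :=
  \sum_(1 <= t < T.+1) c t (look x i (t + i)).

Definition move_cost (N : vec -> R) (x : nat -> vec) (i T : nat) : R :=
  \sum_(1 <= t < T.+1) N (look x i (t + i) - look x i (t + i).-1).

Definition pen_cost (N : vec -> R) (alpha : R) (d : measure_display)
    (Omega : measurableType d) (P : probability Omega R)
    (A : Omega -> nat -> cost_seq -> vec) (c : cost_seq) (i T : nat) : \bar R :=
  (\int[P]_w ((hit_cost c (fun s => A w s c) i T
               + alpha * move_cost N (fun s => A w s c) i T)%:E))%E.

Definition OPT_s (F : set vec) (c : cost_seq) (T : nat) : R :=
  inf [set \sum_(1 <= t < T.+1) c t x | x in F].

Definition OPT_d (F : set vec) (N : vec -> R) (alpha : R) (c : cost_seq)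
    (T : nat) : R :=
  inf [set \sum_(1 <= t < T.+1) (c t (x t) + alpha * N (x t - x t.-1)) |
       x in [set x : nat -> vec | x 0%N = 0 /\
                                  forall t, (0 < t <= T)%N -> F (x t)]].

Definition regret_bound F (N : vec -> R) d (Omega : measurableType d)
    (P : probability Omega R) A (c : cost_seq) (i : nat) (rho : nat -> R) : Prop :=
  forall T, (pen_cost N 0 P A c i T <= (OPT_s F c T + rho T)%:E)%E.

Definition cr_bound F (N : vec -> R) (alpha : R) d (Omega : measurableType d)
    (P : probability Omega R) A (c : cost_seq) (i : nat) (rho : nat -> R)
    (K : R) : Prop :=
  forall T, (pen_cost N 1 P A c i T <= (rho T * OPT_d F N alpha c T + K)%:E)%E.

Definition cd_bound F (N : vec -> R) (alpha : R) d (Omega : measurableType d)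
    (P : probability Omega R) A (c : cost_seq) (i : nat) (rho : nat -> R) : Prop :=
  forall T, (pen_cost N 1 P A c i T <= (OPT_d F N alpha c T + rho T)%:E)%E.

End SOCO.

(* rho(T) = Omega(T): not o(T), i.e. rho(T) >= k T for infinitely many T. *)
Definition OmegaT {R : realType} (rho : nat -> R) : Prop :=
  exists k : R, 0 < k /\ forall T0 : nat, exists T : nat, (T0 <= T)%N /\ k * T%:R <= rho T.

Definition eventually_nat (P : nat -> Prop) : Prop :=
  exists T0 : nat, forall T : nat, (T0 <= T)%N -> P T.

(* Main.v *)
Require Import Defs.
From HB Require Import structures.
From mathcomp Require Import all_boot all_order all_algebra.
From mathcomp Require Import all_classical all_reals all_analysis.
From mathcomp Require Import ring lra measurable_realfun.
From Stdlib Require Import Classical Lia.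
From mathcomp Require Import zify.
Import Order.TTheory GRing.Theory Num.Theory.
Set Implicit Arguments. Unset Strict Implicit. Unset Printing Implicit Defensive.
Local Open Scope classical_set_scope.
Local Open Scope ring_scope.

Section Aux.
Variables (R : realType) (n : nat).
Local Notation vec := 'rV[R]_n.

Lemma seminorm0 (N : vec -> R) : seminorm N -> N 0 = 0.
Proof. by case=> _ h; have := h 0 0; rewrite scale0r normr0 mul0r. Qed.

Lemma seminormN (N : vec -> R) : seminorm N -> forall x, N (- x) = N x.
Proof. by case=> _ h x; rewrite -scaleN1r h normrN normr1 mul1r. Qed.

Lemma seminorm_ge0 (N : vec -> R) : seminorm N -> forall x, 0 <= N x.
Proof.
move=> sN x; have := sN.1 x (- x); rewrite subrr seminorm0 // seminormN //.
lra.
Qed.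

Lemma sum_nat_ge0 (m k : nat) (F : nat -> R) :
  (forall t, (m <= t < k)%N -> 0 <= F t) -> 0 <= \sum_(m <= t < k) F t.
Proof. by move=> H; rewrite big_nat_cond; apply: sumr_ge0 => t /andP[h _]; exact: H. Qed.

Definition cc (j0 : 'I_n) (M : R) : cost_seq R n :=
  fun t x => M * (if odd t then x ord0 j0 else 1 - x ord0 j0).

Lemma cc_pair j0 M t x : cc j0 M t x + cc j0 M t.+1 x = M.
Proof. by rewrite /cc /=; case: (odd t) => /=; ring. Qed.

Lemma look_ne (x : nat -> vec) j t : (0 < t)%N -> look x j (t + j) = x (t + j).
Proof. by move=> t0; rewrite /look; case: eqP => // h; exfalso; lia. Qed.

Lemma hit_pair j0 M (x : nat -> vec) j T :
  hit_cost (cc j0 M) x j.+1 T + hit_cost (cc j0 M) x j T.+1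
  = M * T%:R + cc j0 M 1 (x j.+1).
Proof.
elim: T => [|T IH].
  by rewrite /hit_cost big_geq // big_nat1 look_ne // add0r mulr0 add0r.
rewrite /hit_cost in IH *.
rewrite big_nat_recr //= [in X in _ + X]big_nat_recr //=.
rewrite look_ne // [look x j _]look_ne //.
have E : (T.+1 + j.+1 = T.+2 + j)%R by exact: (esym (addSnnS T.+1 j)).
rewrite E.
have := cc_pair j0 M T.+1 (x (T.+2 + j)).
rewrite -natr1; lra.
Qed.

End Aux.

Lemma le_nnint (R : realType) d (Omega : measurableType d) (P : probability Omega R)
  (f1 f2 : Omega -> \bar R) : (forall w, 0 <= f1 w)%E -> (forall w, f1 w <= f2 w)%E ->
  (\int[P]_w f1 w <= \int[P]_w f2 w)%E.
Proof.
move=> f10 f12.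
have f20 : forall w, (0 <= f2 w)%E by move=> w; exact: le_trans (f10 w) (f12 w).
rewrite !ge0_integralTE //.
apply: ereal_sup_le => _ [s /= hs <-]; exists s => //= w.
exact: le_trans (hs w) (f12 w).
Qed.

Definition cube (R : realType) n : set 'rV[R]_n := fun x => forall k, 0 <= x ord0 k <= 1.
Arguments cube {R n}.

Lemma cc_ge0 (R : realType) n (j0 : 'I_n) (M : R) t (x : 'rV[R]_n) :
  0 <= M -> cube x -> 0 <= cc j0 M t x.
Proof.
move=> M0 /(_ j0) /andP[a b]; rewrite /cc; case: odd; apply: mulr_ge0 => //; lra.
Qed.

Lemma OPTs_ub (R : realType) n (j0 : 'I_n) (M : R) T :
  0 <= M -> OPT_s (@cube R n) (cc j0 M) T <= M * T%:R / 2.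
Proof.
move=> M0; rewrite /OPT_s; set E := [set _ | _ in _].
have lb : has_lbound E.
  exists 0 => _ [x Fx <-]; apply: sum_nat_ge0 => t _; exact: cc_ge0.
have Eh : E (M * T%:R / 2).
  exists (const_mx (2^-1)).
    move=> k; rewrite mxE; apply/andP; split; lra.
  rewrite (eq_big_nat _ _ (F2 := fun _ => M / 2)); last first.
    by move=> t _; rewrite /cc !mxE; case: odd => //; congr (_ * _); field.
  by rewrite sumr_const_nat subn1 /= -mulr_natr; ring.
exact: (ge_inf lb Eh).
Qed.

Lemma OPTd_bounds (R : realType) n (N : 'rV[R]_n -> R) (j0 : 'I_n) (M alpha : R) T :
  seminorm N -> 0 <= M -> 0 <= alpha ->
  0 <= OPT_d cube N alpha (cc j0 M) T /\
  OPT_d cube N alpha (cc j0 M) T <= alpha * N (\row_k ((k == j0)%:R)) * T%:R.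
Proof.
move=> sN M0 a0; rewrite /OPT_d; set E := [set _ | _ in _].
set e1 : 'rV[R]_n := \row_k ((k == j0)%:R).
have lbE : lbound E 0.
  move=> _ [x [x0 Fx] <-]; apply: sum_nat_ge0 => t /andP[t1 tT].
  apply: addr_ge0; first by apply: cc_ge0 => //; apply: Fx; lia.
  by apply: mulr_ge0 => //; apply: seminorm_ge0.
pose b t : R := if (t != 0%N) && ~~ odd t then 1 else 0.
pose xs t := b t *: e1.
have Exs : E (\sum_(1 <= t < T.+1) (cc j0 M t (xs t) + alpha * N (xs t - xs t.-1))).
  exists xs => //; split; first by rewrite /xs /b /= scale0r.
  move=> t _ k; rewrite /xs !mxE /b.
  by case: ifP => _; case: (_ == _); rewrite /= ?(mul1r, mul0r, mulr1, mulr0) ?ler01 ?lexx.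
have K0 : 0 <= N e1 by apply: seminorm_ge0.
have bb : forall t s, `|b t - b s| <= 1.
  move=> t s; rewrite /b.
  by do 2 case: ifP => _; rewrite ?subrr ?subr0 ?sub0r ?normrN ?normr0 ?normr1 ?ler01 ?lexx.
have ub : \sum_(1 <= t < T.+1) (cc j0 M t (xs t) + alpha * N (xs t - xs t.-1))
          <= alpha * N e1 * T%:R.
  apply: le_trans (ler_sum_nat (G := fun _ => alpha * N e1) _) _; last first.
    by rewrite sumr_const_nat subSS subn0 mulr_natr.
  move=> t /andP[t1 _].
  have -> : cc j0 M t (xs t) = 0.
    rewrite /cc /xs !mxE eqxx mulr1 /b.
    have -> : (t != 0%N) by lia.
    by case: odd => /=; rewrite ?subrr mulr0.
  rewrite add0r; apply: ler_wpM2l => //.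
  rewrite /xs -scalerBl sN.2.
  by apply: ler_piMl.
split; first exact: lb_le_inf (ex_intro _ _ Exs) lbE.
apply: le_trans ub.
by apply: (ge_inf _ Exs); exists 0.
Qed.

Lemma key (R : realType) n (N : 'rV[R]_n -> R) (j0 : 'I_n) (M : R) i d
  (Omega : measurableType d) (P : probability Omega R)
  (A : Omega -> nat -> cost_seq R n -> 'rV[R]_n) (rho : nat -> R) T r :
  seminorm N -> 0 <= M -> online_algorithm cube A ->
  regret_bound cube N P A (cc j0 M) i rho ->
  (pen_cost N 1 P A (cc j0 M) i.+1 T <= r%:E)%E ->
  M * T%:R <= r + (M * T.+1%:R / 2 + rho T.+1).
Proof.
move=> sN M0 [Ac [AF Am]] Hreg Hpen.
set c := cc j0 M.
pose h w := hit_cost c (fun s => A w s c) i.+1 T.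
pose f w := hit_cost c (fun s => A w s c) i T.+1.
have hit0 : forall w j T', 0 <= hit_cost c (fun s => A w s c) j T'.
  move=> w j T'; apply: sum_nat_ge0 => t /andP[t1 _]; rewrite look_ne //.
  by apply: cc_ge0 => //; apply: AF; lia.
have mhit : forall j T', measurable_fun setT (fun w => hit_cost c (fun s => A w s c) j T').
  move=> j T'; rewrite /hit_cost; apply: measurable_sum => t.
  rewrite /look; case: eqP => _; first exact: measurable_cst.
  rewrite /c /cc; case: (odd t) => /=; apply: measurable_realfun.measurable_funM; try exact: measurable_cst.
    exact: Am.
  by apply: measurable_realfun.measurable_funB; [exact: measurable_cst | exact: Am].
have mov0 : forall w, 0 <= move_cost N (fun s => A w s c) i.+1 T.
  by move=> w; apply: sum_nat_ge0 => t _; apply: seminorm_ge0.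
have E1 : (\int[P]_w (h w)%:E <= r%:E)%E.
  apply: le_trans Hpen; apply: le_nnint => w; rewrite lee_fin ?mul1r; first exact: hit0.
  by rewrite lerDl.
have E2 : ((M * T%:R)%:E <= \int[P]_w (h w)%:E + \int[P]_w (f w)%:E)%E.
  rewrite -ge0_integralD //; last first.
  - by apply/measurable_EFinP; exact: mhit.
  - by move=> w _; rewrite lee_fin; exact: hit0.
  - by apply/measurable_EFinP; exact: mhit.
  - by move=> w _; rewrite lee_fin; exact: hit0.
  have C : (\int[P]_w (cst (M * T%:R)%:E) w = (M * T%:R)%:E)%E.
    rewrite integral_cst //; set m := (X in (_ * X)%E).
    have -> : m = 1%E by exact: probability_setT.
    by rewrite mule1.
  rewrite -C; apply: le_nnint.
    by move=> w; rewrite lee_fin; apply: mulr_ge0.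
  move=> w; rewrite -EFinD lee_fin /h /f /c hit_pair lerDl.
  by apply: cc_ge0 => //; apply: AF.
have E3 : (\int[P]_w (f w)%:E <= (M * T.+1%:R / 2 + rho T.+1)%:E)%E.
  have := Hreg T.+1; rewrite /pen_cost.
  under eq_integral => w _ do rewrite mul0r addr0.
  move=> H; apply: le_trans H _; rewrite lee_fin lerD2r; exact: OPTs_ub.
have := le_trans E2 (leeD E1 E3).
by rewrite -EFinD lee_fin.
Qed.

Theorem theorem1 (R : realType) (n : nat) (N : 'rV[R]_n -> R)
    (gamma alpha : R) (i : nat) :
  (0 < n)%N -> seminorm N -> 0 < gamma -> 1 <= alpha ->
  exists (F : set 'rV[R]_n) (c : cost_seq R n),
    decision_space F /\ (forall t, cost_function F (c t)) /\
    forall (d : measure_display) (Omega : measurableType d)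
           (P : probability Omega R) (A : Omega -> nat -> cost_seq R n -> 'rV[R]_n),
      online_algorithm F A ->
      (forall rho, regret_bound F N P A c i rho -> OmegaT rho)
      \/
      ((forall rho K, cr_bound F N alpha P A c i.+1 rho K ->
          eventually_nat (fun T => gamma <= rho T)) /\
       (forall rho, cd_bound F N alpha P A c i.+1 rho ->
          eventually_nat (fun T => gamma * T%:R <= rho T))).
Proof.
move=> n0 sN g0 a1.
pose j0 : 'I_n := Ordinal n0.
pose e1 : 'rV[R]_n := \row_k ((k == j0)%:R).
pose K := N e1.
have K0 : 0 <= K by apply: seminorm_ge0.
pose G := gamma * alpha * K.
have G0 : 0 <= G by rewrite /G; apply: mulr_ge0 => //; apply: mulr_ge0; lra.
have aK0 : 0 <= alpha * K by apply: mulr_ge0 => //; lra.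
pose Q := G + gamma + alpha * K + 2.
pose M := 4 * Q.
have M0 : 0 <= M by rewrite /M /Q; lra.
exists cube, (cc j0 M).
split.
  split; first by exists 0 => k; rewrite mxE lexx ler01.
  split.
    move=> x y l Hx Hy /andP[l0 l1] k; rewrite !mxE.
    move: (Hx k) (Hy k) => /andP[x0 x1] /andP[y0 y1].
    by apply/andP; split; nra.
  by move=> x Hx k; case/andP: (Hx k).
split.
  move=> t; split; first by move=> x Hx; exact: cc_ge0.
  move=> x y l Hx Hy _; rewrite /cc !mxE.
  by case: odd; rewrite le_eqVlt; apply/orP; left; apply/eqP; ring.
move=> d Omega P A HA.
case: (classic (forall rho, regret_bound cube N P A (cc j0 M) i rho -> OmegaT rho)) => [H|H].
  by left.
right.
have [rho [Hreg HnO]] : exists rho, regret_bound cube N P A (cc j0 M) i rho /\ ~ OmegaT rho.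
  apply: NNPP => Hn; apply: H => rho Hr; apply: NNPP => Ho; apply: Hn; by exists rho.
have [T1 HT1] : exists T1, forall T, (T1 <= T)%N -> rho T < T%:R.
  apply: NNPP => Hn; apply: HnO; exists 1; split; first lra.
  move=> T0; apply: NNPP => Hn2; apply: Hn; exists T0 => T HT.
  rewrite ltNge; apply/negP => HTr; apply: Hn2; exists T; split => //.
  by rewrite mul1r.
have Hkey : forall T r, (T1 <= T)%N ->
    (pen_cost N 1 P A (cc j0 M) i.+1 T <= r%:E)%E ->
    M * T%:R <= r + (M * T.+1%:R / 2 + T.+1%:R).
  move=> T r HT Hp; have := key sN M0 HA Hreg Hp.
  have := HT1 T.+1 (leqW HT); lra.
have Od : forall T, 0 <= OPT_d cube N alpha (cc j0 M) T /\
    OPT_d cube N alpha (cc j0 M) T <= alpha * K * T%:R.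
  move=> T; apply: OPTd_bounds => //; lra.
split.
  move=> rho' K1 Hcr.
  exists (maxn T1 (Num.truncn (K1 + 2 * Q + 1)).+1) => T HT.
  rewrite leNgt; apply/negP => Hlt.
  have HT1' : (T1 <= T)%N by move: HT; rewrite geq_max => /andP[].
  have HT2 : ((Num.truncn (K1 + 2 * Q + 1)).+1 <= T)%N by move: HT; rewrite geq_max => /andP[].
  have HTr : K1 + 2 * Q + 1 < T%:R.
    apply: lt_le_trans (truncnS_gt _) _; by rewrite ler_nat.
  have := Hkey T _ HT1' (Hcr T).
  have [Oa Ob] := Od T.
  set Ov := OPT_d _ _ _ _ _ in Oa Ob *.
  have H1 : rho' T * Ov <= gamma * Ov by apply: ler_wpM2r => //; exact: ltW.
  have H2 : gamma * Ov <= G * T%:R.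
    rewrite /G -!mulrA; apply: ler_wpM2l; first lra.
    by rewrite mulrA.
  have T0 : 0 <= T%:R :> R by [].
  move=> Hk.
  have Hk2 : M * T%:R <= rho' T * Ov + K1 + (M * (T%:R + 1) / 2 + (T%:R + 1)).
    by move: Hk; rewrite -natr1.
  have E : M * (T%:R + 1) / 2 = 2 * Q * T%:R + 2 * Q by rewrite /M; field.
  have E2 : M * T%:R = 4 * Q * T%:R by rewrite /M.
  have P1 : 0 <= (2 * Q - G - 2) * T%:R by apply: mulr_ge0 => //; rewrite /Q; lra.
  rewrite E E2 in Hk2; lra.
move=> rho' Hcd.
exists (maxn T1 2) => T HT.
have HT1' : (T1 <= T)%N by move: HT; rewrite geq_max => /andP[].
have HT2 : (2 <= T)%N by move: HT; rewrite geq_max => /andP[].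
have HT2r : 2 <= T%:R :> R by rewrite (ler_nat R 2 T).
have := Hkey T _ HT1' (Hcd T).
have [Oa Ob] := Od T.
set Ov := OPT_d _ _ _ _ _ in Oa Ob *.
move=> Hk.
have Hk2 : M * T%:R <= Ov + rho' T + (M * (T%:R + 1) / 2 + (T%:R + 1)).
  by move: Hk; rewrite -natr1.
have E : M * (T%:R + 1) / 2 = 2 * Q * T%:R + 2 * Q by rewrite /M; field.
have E2 : M * T%:R = 4 * Q * T%:R by rewrite /M.
have QT : Q * T%:R = G * T%:R + gamma * T%:R + alpha * K * T%:R + 2 * T%:R.
  by rewrite /Q; ring.
have P1 : 0 <= (Q + G + 1) * (T%:R - 2) by apply: mulr_ge0; rewrite /Q; lra.
rewrite E E2 in Hk2; nra.
Qed.
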